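(* Let $S\in\mathcal{B}_A(\mathcal{H})$. Then $$\omega_A^2(S)\le\frac1{\sqrt2}\,\omega_A\big(S^{\sharp_A}S+i\,SS^{\sharp_A}\big).$$
   Context: $\mathcal{H}$ is a complex Hilbert space with inner product $\langle\cdot,\cdot\rangle$, and $A$ is a fixed nonzero positive bounded operator on $\mathcal{H}$. Set $\langle x,y\rangle_A=\langle Ax,y\rangle$ and $\|x\|_A=\|A^{1/2}x\|$. $\mathcal{B}_A(\mathcal{H})$ is the set of bounded operators $T$ for which there exists a bounded $S$ with $\langle Tx,y\rangle_A=\langle x,Sy\rangle_A$ for all $x,y$ (equivalently $\mathcal{R}(T^*A)\subseteq\mathcal{R}(A)$). For $T\in\mathcal{B}_A(\mathcal{H})$, $T^{\sharp_A}=A^\dagger T^*A$ ($A^\dagger$ the Moore–Penrose inverse) is the reduced solution of $AX=T^*A$. $\omega_A(T)=\sup\{|\langle Tx,x\rangle_A|:\|x\|_A=1\}$. *)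

(* Defs.v *)
From mathcomp Require Import all_boot all_order all_algebra complex.
From mathcomp Require Import all_classical reals.
Import GRing.Theory Num.Theory.
Set Implicit Arguments. Unset Strict Implicit. Unset Printing Implicit Defensive.
Local Open Scope ring_scope.
Local Open Scope classical_set_scope.

Section Defs.
Variable R : realType.
Variable H : lmodType R[i].
Variable inner : H -> H -> R[i].

Definition is_inner_product : Prop :=
  [/\ (forall (a : R[i]) (x y z : H), inner (a *: x + y) z = a * inner x z + inner y z),
      (forall x y : H, inner y x = Num.conj (inner x y)),
      (forall x : H, 0 <= inner x x) &
      (forall x : H, inner x x = 0 -> x = 0)].

Definition hnorm (x : H) : R := Num.sqrt (complex.Re (inner x x)).

Definition is_complete : Prop :=
  forall u : nat -> H,
    (forall e : R, 0 < e -> exists N : nat, forall m n : nat,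
        (N <= m)%N -> (N <= n)%N -> hnorm (u m - u n) < e) ->
    exists l : H, forall e : R, 0 < e -> exists N : nat, forall n : nat,
        (N <= n)%N -> hnorm (u n - l) < e.

Definition bounded_op (T : H -> H) : Prop :=
  (forall (a : R[i]) (x y : H), T (a *: x + y) = a *: T x + T y) /\
  exists M : R, forall x : H, hnorm (T x) <= M * hnorm x.

Definition is_adjoint (T Ts : H -> H) : Prop :=
  bounded_op Ts /\ forall x y : H, inner (T x) y = inner x (Ts y).

Definition positive_op (A : H -> H) : Prop := forall x : H, 0 <= inner (A x) x.

Variable A : H -> H.

(* <x,y>_A = <Ax,y> and ||x||_A = ||A^{1/2} x|| = sqrt <Ax,x> *)
Definition innerA (x y : H) : R[i] := inner (A x) y.
Definition normA (x : H) : R := Num.sqrt (complex.Re (innerA x x)).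

Definition in_BA (T : H -> H) : Prop :=
  bounded_op T /\ exists S : H -> H,
    bounded_op S /\ forall x y : H, innerA (T x) y = innerA x (S y).

Definition in_closure_range (v : H) : Prop :=
  forall e : R, 0 < e -> exists z : H, hnorm (v - A z) < e.

(* X = T^{#_A} = A^dagger T^* A, i.e. the reduced solution of A X = T^* A:
   the bounded solution X of A X = T^* A with R(X) contained in closure(R(A)). *)
Definition is_A_sharp (T X : H -> H) : Prop :=
  bounded_op X /\
  (exists Ts : H -> H, is_adjoint T Ts /\ forall x : H, A (X x) = Ts (A x)) /\
  (forall x : H, in_closure_range (X x)).

Definition omegaA (T : H -> H) : R :=
  sup [set Normc.normc (innerA (T x) x) | x in [set x : H | normA x = 1]].

End Defs.

(* Main.v *)
Require Import Defs.
From mathcomp Require Import all_boot all_order all_algebra complex.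
From mathcomp Require Import all_classical reals.
From mathcomp Require Import ring lra.
Import Order.TTheory GRing.Theory Num.Theory.
Set Implicit Arguments. Unset Strict Implicit.
Local Open Scope ring_scope.

Section Sesq.
Variable R : realType.
Local Notation C := R[i].
Variable H : lmodType C.
Variable f : H -> H -> C.
Hypothesis fL : forall (a : C) x y z, f (a *: x + y) z = a * f x z + f y z.
Hypothesis fR : forall (a : C) x y z, f x (a *: y + z) = a^* * f x y + f x z.

Lemma f0l z : f 0 z = 0.
Proof. have := fL 1 0 0 z; rewrite scaler0 addr0 mul1r => h.
by apply: (addrI (f 0 z)); rewrite addr0 -h. Qed.
Lemma f0r z : f z 0 = 0.
Proof. have := fR 1 z 0 0; rewrite scaler0 addr0 rmorph1 mul1r => h.
by apply: (addrI (f z 0)); rewrite addr0 -h. Qed.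
Lemma fDl x y z : f (x + y) z = f x z + f y z.
Proof. by rewrite -{1}(scale1r x) fL mul1r. Qed.
Lemma fZl a x z : f (a *: x) z = a * f x z.
Proof. by rewrite -(addr0 (a *: x)) fL f0l addr0. Qed.
Lemma fDr x y z : f z (x + y) = f z x + f z y.
Proof. by rewrite -{1}(scale1r x) fR rmorph1 mul1r. Qed.
Lemma fZr a x z : f z (a *: x) = a^* * f z x.
Proof. by rewrite -(addr0 (a *: x)) fR f0r addr0. Qed.

Lemma fexp x y c : f (x + c *: y) (x + c *: y) =
  f x x + c * f y x + c^* * f x y + c * c^* * f y y.
Proof. rewrite !fDl !fDr !fZl !fZr. ring. Qed.

Lemma fexp1 x y c : c * c^* = 1 -> f (x + c *: y) (x + c *: y) =
  f x x + c * f y x + c^* * f x y + f y y.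
Proof. by move=> h; rewrite fexp h mul1r. Qed.

Lemma cc1 : (1 : C) * 1^* = 1. Proof. by rewrite rmorph1 mulr1. Qed.
Lemma ccN1 : (-1 : C) * (-1)^* = 1. Proof. by rewrite rmorphN rmorph1 mulrNN mulr1. Qed.
Lemma sqi : 'i * 'i = -1 :> C. Proof. by rewrite -expr2 sqrCi. Qed.
Lemma cci : ('i : C) * 'i^* = 1. Proof. by rewrite conjCi mulrN sqi opprK. Qed.
Lemma ccNi : (-'i : C) * (-'i)^* = 1. Proof. by rewrite rmorphN /= conjCi mulrNN mulrN sqi opprK. Qed.

Lemma polar x y :
  f (x + 1 *: y) (x + 1 *: y) - f (x + (-1) *: y) (x + (-1) *: y)
  + 'i * f (x + 'i *: y) (x + 'i *: y) - 'i * f (x + (-'i) *: y) (x + (-'i) *: y)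
  = 4 * f x y.
Proof.
rewrite (fexp1 _ _ cc1) (fexp1 _ _ ccN1) (fexp1 _ _ cci) (fexp1 _ _ ccNi).
rewrite !rmorphN /= ?conjC1 ?conjCi.
apply: (@eq_trans _ _ (2 * f y x * (1 + 'i * 'i) + 2 * f x y * (1 - 'i * 'i))).
  ring.
rewrite sqi subrr mulr0 add0r opprK. ring.
Qed.

Lemma fsum x y :
  f (x + 1 *: y) (x + 1 *: y) + f (x + (-1) *: y) (x + (-1) *: y)
  + f (x + 'i *: y) (x + 'i *: y) + f (x + (-'i) *: y) (x + (-'i) *: y)
  = 4 * f x x + 4 * f y y.
Proof.
rewrite (fexp1 _ _ cc1) (fexp1 _ _ ccN1) (fexp1 _ _ cci) (fexp1 _ _ ccNi).
rewrite !rmorphN /= ?conjC1 ?conjCi. ring.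
Qed.
End Sesq.

Section RealFacts.
Variable R : realType.

Lemma fin1 (l a b : R) : 0 <= l -> l ^+ 2 <= a -> l ^+ 2 <= b ->
  l ^+ 2 <= (Num.sqrt 2)^-1 * Num.sqrt (a ^+ 2 + b ^+ 2).
Proof.
move=> l0 ha hb.
have l2 : 0 <= l ^+ 2 by rewrite exprn_ge0.
rewrite ler_pdivlMl ?sqrtr_gt0 ?ltr0n //.
have -> : Num.sqrt 2 * l ^+ 2 = Num.sqrt (2 * (l ^+ 2) ^+ 2).
  by rewrite sqrtrM ?ler0n // sqrtr_sqr ger0_norm.
rewrite ler_sqrt ?addr_ge0 ?exprn_ge0 //; try exact: (le_trans l2).
have h1 : (l ^+ 2) ^+ 2 <= a ^+ 2 by rewrite ler_pXn2r ?nnegrE // (le_trans l2).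
have h2 : (l ^+ 2) ^+ 2 <= b ^+ 2 by rewrite ler_pXn2r ?nnegrE // (le_trans l2).
by rewrite mulr_natl mulr2n lerD.
Qed.

Lemma fin2 (a b : R) : 0 <= a -> 0 <= b -> Num.sqrt (a ^+ 2 + b ^+ 2) <= a + b.
Proof.
move=> a0 b0.
rewrite -(ger0_norm (addr_ge0 a0 b0)) -sqrtr_sqr ler_sqrt ?exprn_ge0 //.
rewrite sqrrD lerD2r -[X in X <= _]addr0 lerD2l.
by rewrite mulrn_wge0 // mulr_ge0.
all: by rewrite ?addr_ge0.
Qed.

Lemma supge0 (E : set R) : (forall y, E y -> 0 <= y) -> 0 <= sup E.
Proof.
move=> h.
have [hs|hs] := pselect (has_sup E); last by rewrite sup_out.
have [y Ey] := hs.1.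
by apply: (le_trans (h _ Ey)); apply: sup_upper_bound.
Qed.
End RealFacts.


Section Main.
Variable R : realType.
Local Notation C := R[i].
Variable H : lmodType C.
Variable inner : H -> H -> C.
Hypothesis iL : forall (a : C) x y z, inner (a *: x + y) z = a * inner x z + inner y z.
Hypothesis iC : forall x y, inner y x = (inner x y)^*.
Variable A : H -> H.
Hypothesis Apos : forall x, 0 <= inner (A x) x.
Hypothesis AL : forall (a : C) x y, A (a *: x + y) = a *: A x + A y.

Lemma iR (a : C) x y z : inner x (a *: y + z) = a^* * inner x y + inner x z.
Proof. by rewrite iC iL rmorphD rmorphM /= -!iC. Qed.

Definition ip x y := inner (A x) y.

Lemma ipL (a : C) x y z : ip (a *: x + y) z = a * ip x z + ip y z.
Proof. by rewrite /ip AL iL. Qed.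
Lemma ipR (a : C) x y z : ip x (a *: y + z) = a^* * ip x y + ip x z.
Proof. by rewrite /ip iR. Qed.

Lemma selfadj x y : inner (A x) y = inner x (A y).
Proof.
have gL : forall (a : C) x y z, inner (a *: x + y) (A z) = a * inner x (A z) + inner y (A z).
  by move=> *; rewrite iL.
have gR : forall (a : C) x y z, inner x (A (a *: y + z)) = a^* * inner x (A y) + inner x (A z).
  by move=> *; rewrite AL iR.
have diag : forall z, inner (A z) z = inner z (A z).
  by move=> z; rewrite [RHS]iC conj_Creal // ger0_real.
have h1 := @polar _ _ ip ipL ipR x y.
have h2 := @polar _ _ _ gL gR x y.
rewrite /ip !diag /= h2 in h1.
apply: (mulfI _ (esym h1)).
by rewrite pnatr_eq0.
Qed.

Lemma ipC x y : ip y x = (ip x y)^*.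
Proof. by rewrite /ip iC selfadj. Qed.

Lemma ip_ge0 x : 0 <= ip x x. Proof. exact: Apos. Qed.

Lemma ipZl a x y : ip (a *: x) y = a * ip x y. Proof. exact: (fZl ipL). Qed.
Lemma ipZr a x y : ip y (a *: x) = a^* * ip y x. Proof. exact: (fZr ipR). Qed.

Lemma L1 x u : ip x x = 1 -> `|ip u x| ^+ 2 <= ip u u.
Proof.
move=> hx; set l := ip u x.
have := ip_ge0 (u + (- l) *: x).
rewrite (fexp ipL ipR) hx mulr1 -/l (ipC u x) -/l normCK.
rewrite rmorphN /=.
have -> : ip u u + - l * l^* + - l^* * l + - l * - l^* = ip u u - l * l^* by ring.
by rewrite subr_ge0.
Qed.

Lemma D u v : ip v v = 0 -> ip u v = 0.
Proof.
move=> hv; set l := ip u v.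
apply/eqP; apply: contraT => hl.
have hr : l * l^* != 0 by rewrite mulf_neq0 // conjC_eq0.
have hrr : l * l^* \is Num.real by rewrite ger0_real // -normCK exprn_ge0.
have huu : ip u u \is Num.real by rewrite ger0_real // ip_ge0.
pose k := (ip u u + 1) / (l * l^*).
have kr : k^* = k.
  by rewrite conj_Creal // rpredM ?rpredV ?rpredD ?rpred1.
have := ip_ge0 (u + (- (k * l)) *: v).
rewrite (fexp ipL ipR) hv mulr0 addr0 -/l (ipC u v) -/l.
rewrite rmorphN rmorphM /= kr.
have -> : ip u u + - (k * l) * l^* + - (k * l^*) * l
   = ip u u - 2 * ((ip u u + 1) / (l * l^*) * (l * l^*)) by rewrite /k; ring.
rewrite divfK //.
have -> : ip u u - 2 * (ip u u + 1) = - (ip u u + 2) by ring.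
rewrite oppr_ge0 => h.
have : 0 < ip u u + 2 by apply: ltr_wpDl (ip_ge0 u) _; rewrite ltr0n.
by move/lt_geF; rewrite h.
Qed.

Lemma inv2K (r : C) : r != 0 -> r^-1 * (r^-1 * (r * r)) = 1.
Proof. by move=> h; field. Qed.

Section Op.
Variable T : H -> H.
Hypothesis TL : forall (a : C) x y, T (a *: x + y) = a *: T x + T y.

Lemma T0 : T 0 = 0.
Proof. have := TL 1 0 0; rewrite scaler0 addr0 scale1r => h.
by apply: (addrI (T 0)); rewrite addr0 -h. Qed.
Lemma TZ a x : T (a *: x) = a *: T x.
Proof. by rewrite -(addr0 (a *: x)) TL T0 addr0. Qed.

Lemma fTL (a : C) x y z : ip (T (a *: x + y)) z = a * ip (T x) z + ip (T y) z.
Proof. by rewrite TL ipL. Qed.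

Lemma L0 (M : C) : (forall x, ip x x = 1 -> `|ip (T x) x| <= M) ->
  forall w, `|ip (T w) w| <= M * ip w w.
Proof.
move=> hM w.
have [h0|hn] := eqVneq (ip w w) 0.
  by rewrite h0 mulr0 (D _ h0) normr0.
have gt0 : 0 < ip w w by rewrite lt_def hn ip_ge0.
set r := sqrtC (ip w w).
have r0 : 0 < r by rewrite sqrtC_gt0.
have rr : r^-1^* = r^-1.
  by rewrite conj_Creal // ger0_real // invr_ge0 ltW.
have rn : r != 0 by rewrite gt_eqF.
have h1 : ip (r^-1 *: w) (r^-1 *: w) = 1.
  rewrite ipZl ipZr rr -(sqrtCK (ip w w)) -/r expr2.
  exact: inv2K.
have := hM _ h1.
rewrite TZ ipZl ipZr rr !normrM ger0_norm; last by rewrite invr_ge0 ltW.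
rewrite -(sqrtCK (ip w w)) -/r => h.
rewrite [M * _]mulrC.
apply: (le_trans _ (ler_wpM2l _ h)); last by rewrite exprn_ge0 // ltW.
rewrite le_eqVlt; apply/orP; left; apply/eqP; field.
by [].
Qed.

Lemma tri4 (a b c d : C) : `|a - b + 'i * c - 'i * d| <= `|a| + `|b| + `|c| + `|d|.
Proof.
apply: (le_trans (ler_normB _ _)); rewrite normrM normCi mul1r lerD2r.
apply: (le_trans (ler_normD _ _)); rewrite normrM normCi mul1r lerD2r.
exact: ler_normB.
Qed.

Lemma L2 (M : C) : (forall w, `|ip (T w) w| <= M * ip w w) ->
  forall x, ip x x = 1 -> ip (T x) (T x) <= 4 * M ^+ 2.
Proof.
move=> hB x hx.
have M0 : 0 <= M by have := hB x; rewrite hx mulr1; apply: le_trans.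
have [h0|hn] := eqVneq (ip (T x) (T x)) 0.
  by rewrite h0 mulr_ge0 // exprn_ge0.
have gt0 : 0 < ip (T x) (T x) by rewrite lt_def hn ip_ge0.
set s := sqrtC (ip (T x) (T x)).
have s0 : 0 < s by rewrite sqrtC_gt0.
have ss : s^-1^* = s^-1.
  by rewrite conj_Creal // ger0_real // invr_ge0 ltW.
have sn : s != 0 by rewrite gt_eqF.
set y := s^-1 *: T x.
have hy : ip y y = 1.
  rewrite ipZl ipZr ss -(sqrtCK (ip (T x) (T x))) -/s expr2.
  exact: inv2K.
have hxy : ip (T x) y = s.
  rewrite ipZr ss -(sqrtCK (ip (T x) (T x))) -/s expr2.
  by rewrite mulrA mulVf // mul1r.
have P := @polar _ _ (fun u v => ip (T u) v) fTL (fun a u => ipR a (T u)) x y.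
rewrite /= hxy in P.
have Q := @fsum _ _ ip ipL ipR x y.
rewrite hx hy in Q.
have h4 : 4 * s <= M * (4 * 1 + 4 * 1).
  have -> : 4 * s = `|4 * s| by rewrite ger0_norm // mulr_ge0 // ltW.
  rewrite -P; apply: (le_trans (tri4 _ _ _ _)).
  rewrite -Q !mulrDr.
  by rewrite !lerD ?hB.
have h2 : s <= 2 * M.
  have e : M * (4 * 1 + 4 * 1) = 4 * (2 * M) by ring.
  rewrite e in h4.
  by rewrite -(ler_pM2l (_ : 0 < 4)) ?ltr0n.
rewrite -(sqrtCK (ip (T x) (T x))) -/s.
have -> : 4 * M ^+ 2 = (2 * M) ^+ 2 by rewrite exprMn -natrX.
by rewrite !expr2 ler_pM // ltW.
Qed.
End Op.
Section SS.
Variables S Ss : H -> H.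
Hypothesis SL : forall (a : C) x y, S (a *: x + y) = a *: S x + S y.
Hypothesis SsL : forall (a : C) x y, Ss (a *: x + y) = a *: Ss x + Ss y.
Hypothesis R1 : forall y z, ip (Ss y) z = ip y (S z).

Lemma ipT x : ip (Ss (S x) + 'i%C *: S (Ss x)) x
   = ip (S x) (S x) + 'i * ip (Ss x) (Ss x).
Proof.
rewrite (fDl ipL) (fZl ipL) R1 (ipC x (S (Ss x))) -(R1 x (Ss x)).
by rewrite conj_Creal // ger0_real // ip_ge0.
Qed.

Lemma lb x : ip x x = 1 -> `|ip (S x) x| ^+ 2 <= ip (Ss x) (Ss x).
Proof.
move=> hx; have := L1 (Ss x) hx.
by rewrite R1 (ipC (S x) x) norm_conjC.
Qed.

Lemma SsB (M : C) : (forall w, `|ip (S w) w| <= M * ip w w) ->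
  (forall w, `|ip (Ss w) w| <= M * ip w w).
Proof. by move=> h w; rewrite R1 (ipC (S w) w) norm_conjC. Qed.

Lemma reC (z : C) : 0 <= z -> z = ((complex.Re z)%:C)%C.
Proof. by move=> hz; rewrite {1}[z]complexE ger0_Im // mulr0 addr0. Qed.

Lemma conv1 (z : C) : `|z| = ((Normc.normc z)%:C)%C.
Proof. by case: z. Qed.

Lemma conv2 (a b : R) : Normc.normc (((a%:C)%C : C) + 'i * (b%:C)%C) = Num.sqrt (a^+2 + b^+2).
Proof. by rewrite /=; simpc. Qed.

Lemma nA1 x : Num.sqrt (complex.Re (ip x x)) = 1 -> ip x x = 1.
Proof.
move=> h; rewrite (reC (ip_ge0 x)).
have hr : 0 <= complex.Re (ip x x) by rewrite -lecR -reC ?ip_ge0.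
by rewrite -(sqr_sqrtr hr) h expr1n.
Qed.

Lemma nA1' x : ip x x = 1 -> Num.sqrt (complex.Re (ip x x)) = 1.
Proof. by move=> ->; rewrite /= sqrtr1. Qed.

Lemma pointwise x : ip x x = 1 ->
  Normc.normc (ip (S x) x) ^+ 2 <=
  (Num.sqrt 2)^-1 * Normc.normc (ip (Ss (S x) + 'i%C *: S (Ss x)) x).
Proof.
move=> hx.
rewrite ipT (reC (ip_ge0 (S x))) (reC (ip_ge0 (Ss x))) conv2.
apply: fin1; first by case: (ip (S x) x) => a b; rewrite /= sqrtr_ge0.
- rewrite -lecR rmorphXn /= -conv1 -reC ?ip_ge0 //; exact: L1.
- rewrite -lecR rmorphXn /= -conv1 -reC ?ip_ge0 //; exact: lb.
Qed.

Lemma Tbound (M : R) : (forall x, ip x x = 1 -> Normc.normc (ip (S x) x) <= M) ->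
  forall x, ip x x = 1 -> Normc.normc (ip (Ss (S x) + 'i%C *: S (Ss x)) x) <= 8 * M ^+ 2.
Proof.
move=> hM.
have hM' : forall x, ip x x = 1 -> `|ip (S x) x| <= (M%:C)%C.
  by move=> x hx; rewrite conv1 lecR hM.
have B := L0 SL hM'.
have Bs := SsB B.
move=> x hx.
rewrite ipT (reC (ip_ge0 (S x))) (reC (ip_ge0 (Ss x))) conv2.
have ha := L2 SL B hx.
have hb := L2 SsL Bs hx.
rewrite (reC (ip_ge0 (S x))) in ha.
rewrite (reC (ip_ge0 (Ss x))) in hb.
have e : 4 * ((M%:C)%C : C) ^+ 2 = (((4 * M ^+ 2) : R)%:C)%C.
  by rewrite rmorphM rmorphXn /= rmorph_nat.
rewrite e lecR in ha; rewrite e lecR in hb.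
have a0 : 0 <= complex.Re (ip (S x) (S x)) by rewrite -lecR -reC ?ip_ge0.
have b0 : 0 <= complex.Re (ip (Ss x) (Ss x)) by rewrite -lecR -reC ?ip_ge0.
apply: (le_trans (fin2 a0 b0)).
have -> : 8 * M ^+ 2 = 4 * M ^+ 2 + 4 * M ^+ 2 by rewrite -mulrDl -natrD.
exact: lerD.
Qed.

Lemma normc_ge0 (z : C) : 0 <= Normc.normc z.
Proof. by case: z => a b; rewrite /= sqrtr_ge0. Qed.

Lemma main_sec :
  sup [set Normc.normc (inner (A (S x)) x) | x in
        [set x | Num.sqrt (complex.Re (inner (A x) x)) = 1]] ^+ 2
  <= (Num.sqrt 2)^-1 *
     sup [set Normc.normc (inner (A ((fun x => Ss (S x) + 'i%C *: S (Ss x)) x)) x) | x in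
        [set x | Num.sqrt (complex.Re (inner (A x) x)) = 1]].
Proof.
set ES := (X in sup X ^+ 2 <= _); set ET := (X in _ <= _ * sup X).
have ET0 : forall y, ET y -> 0 <= y by move=> y [x _ <-]; exact: normc_ge0.
have ES0 : forall y, ES y -> 0 <= y by move=> y [x _ <-]; exact: normc_ge0.
have c0 : 0 <= (Num.sqrt (2 : R))^-1 by rewrite invr_ge0 sqrtr_ge0.
have sT0 : 0 <= (Num.sqrt (2 : R))^-1 * sup ET by rewrite mulr_ge0 // supge0.
have [hs|hs] := pselect (has_sup ES); last first.
  by rewrite sup_out // expr2 mulr0.
case: (hs) => ne [M hM].
have hM' : forall x, ip x x = 1 -> Normc.normc (ip (S x) x) <= M.
  by move=> x hx; apply: hM; exists x => //; exact: nA1'.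
have TB := Tbound hM'.
have hET : has_ubound ET.
  by exists (8 * M ^+ 2) => y [x hx <-]; exact: TB _ (nA1 hx).
have ubT := ub_le_sup hET.
have key : ubound ES (Num.sqrt ((Num.sqrt (2 : R))^-1 * sup ET)).
  move=> y [x hx <-].
  have p := pointwise (nA1 hx).
  rewrite -(ger0_norm (normc_ge0 (inner (A (S x)) x))) -sqrtr_sqr ler_sqrt //.
  apply: (le_trans p); apply: ler_wpM2l => //.
  by apply: ubT; exists x.
have hle := ge_sup ne key.
have s0 : 0 <= sup ES := supge0 ES0.
rewrite -(sqr_sqrtr sT0) ler_pXn2r ?nnegrE ?sqrtr_ge0 //.
Qed.
End SS.
End Main.

Unset Implicit Arguments.

Theorem corollary3p14 (R : realType) (H : lmodType R[i]) (inner : H -> H -> R[i])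
    (hinner : is_inner_product inner) (hcomplete : is_complete inner)
    (A : H -> H) (hAb : bounded_op inner A) (hApos : positive_op inner A)
    (hAnz : exists x : H, A x != 0)
    (S : H -> H) (hS : in_BA inner A S)
    (Ssharp : H -> H) (hSsharp : is_A_sharp inner A S Ssharp) :
  omegaA inner A S ^+ 2
    <= (Num.sqrt (2 : R))^-1 *
       omegaA inner A (fun x => Ssharp (S x) + 'i%C *: S (Ssharp x)).
Proof.
case: hinner => iL iC _ _.
case: hAb => AL _.
case: hS => [[SL _] _].
case: hSsharp => [[SsL _] [[Ts [[_ hadj] hAX]] _]].
have R1 : forall y z, inner (A (Ssharp y)) z = inner (A y) (S z).
  by move=> y z; rewrite hAX iC -hadj -iC.
exact: (main_sec iL iC hApos AL SL SsL R1).
Qed.
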